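(* Assume only that each finest set $I_{j_1,\dots,j_M}$ contains at least one observed index (the set $I_{\bm y_t}$ below), together with the uniformity conditions $J_m=J$, $r'_{j_1,\dots,j_m}=r'_m$. Let $B$ be an $n\times N'$ matrix with the MRA-lp block sparsity pattern, let $D$ be an $n\times n$ diagonal matrix with nonnegative diagonal entries and $D_{ii}=0$ for $i\notin I_{\bm y_t}$, let $\Lambda_{D}=\mathbf I_{N'}+B^\top DB$, let $L_D$ be its lower triangular Cholesky factor, and let $B_D=B(L_D^{-1})^\top$. Then: (a) for $p\ge q$, the $(M+1-p,M+1-q)$th block of $\Lambda_D$ (blocks induced by the column blocks $B^M,\dots,B^0$ of $B$) has size $J^pr'_p\times J^qr'_q$ and is block diagonal with $J^q$ diagonal blocks of size $J^{p-q}r'_p\times r'_q$, entries outside them being zero; (b) with $G=(V,E)$ the undirected graph on $v_1,\dots,v_{N'}$ whose adjacency matrix has 1 at every off-diagonal position inside one of the blocks described in (a) (and symmetric counterpart) and 0 elsewhere, if $1\le j<i\le N'$ and $(v_i,v_j)\notin E$ then $L_D[i,j]=L_D^{-1}[i,j]=0$; (c) $B_D$ has zero entries at every position outside the diagonal blocks $B_{j_1,\dots,j_m}$ ($m=0,\dots,M$) of the MRA-lp pattern; (d) the number of nonzero entries in each column of $L_D$ and of $L_D^{-1}$ is $\mathcal O(N)$, $N=\sum_{m=0}^M r'_m$.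
   Context: Grid indices $I_0=\{1,\dots,n\}$; $M\ge 0$, $J\ge 2$; multi-indices $(j_1,\dots,j_m)$, $1\le j_i\le J$ (empty multi-index $0$ for $m=0$); nested index sets $I_{j_1,\dots,j_m}$ with $I_0$ at $m=0$ and $I_{j_1,\dots,j_m}$ the disjoint union of $I_{j_1,\dots,j_m,j_{m+1}}$, $j_{m+1}=1,\dots,J$; indices ordered so that lexicographically larger finest multi-indices $(j_1,\dots,j_M)$ have all their indices larger. Integers $r'_m\ge 1$; $N'=\sum_{m=0}^M J^m r'_m$. MRA-lp block sparsity pattern: $B=(B^M\;\cdots\;B^0)$, where $B^m$ is an $n$-row block diagonal matrix whose diagonal blocks $B_{j_1,\dots,j_m}$, of size $|I_{j_1,\dots,j_m}|\times r'_m$, occupy rows $I_{j_1,\dots,j_m}$, in lexicographic order of $(j_1,\dots,j_m)$, all other entries being zero (the MRA-lp output of a symmetric positive definite matrix has this form). $I_{\bm y_t}\subseteq I_0$ is the set of grid indices at which observations are available at time $t$. In the paper's non-Gaussian filter, $D$ is the diagonal matrix of negative second derivatives $-\frac{d^2}{dx_{ti}^2}\log g_{ti}(y_{ti}\mid x_{ti})$ at observed indices (assumed nonnegative), zero elsewhere. *)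

(* Defs.v *)
From HB Require Import structures.
From mathcomp Require Import all_boot all_order all_algebra.
Set Implicit Arguments. Unset Strict Implicit. Unset Printing Implicit Defensive.
Import Order.TTheory GRing.Theory Num.Theory.
Local Open Scope ring_scope.

(* Conventions:
   - grid indices are 'I_n (0-based);
   - the finest multi-index (j_1,...,j_M) (1 <= j_k <= J) of a grid index i is
     encoded by the number  leaf i = sum_k (j_k - 1) J^(M-k)  in [0, J^M);
     hence i belongs to I_{j_1..j_m} iff  leaf i %/ J^(M-m)  is the base-J
     code of (j_1..j_m) (lexicographic order = numeric order of codes);
   - columns of B are 0-based; B = (B^M ... B^0), B^m has J^m r'_m columns,
     its block for code b (b-th multi-index in lexicographic order) occupies
     the columns coloff m + b*r'_m, ..., coloff m + (b+1)*r'_m - 1. *)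

Definition ncols (J : nat) (r : nat -> nat) (m : nat) : nat := (J ^ m * r m)%N.

Definition Nprime (M J : nat) (r : nat -> nat) : nat :=
  (\sum_(m < M.+1) ncols J r m)%N.

Definition Nsmall (M : nat) (r : nat -> nat) : nat := (\sum_(m < M.+1) r m)%N.

Definition coloff (M J : nat) (r : nat -> nat) (m : nat) : nat :=
  (\sum_(m.+1 <= l < M.+1) ncols J r l)%N.

Definition in_level (M J : nat) (r : nat -> nat) (c m : nat) : bool :=
  (m <= M)%N && (coloff M J r m <= c < coloff M J r m + ncols J r m)%N.

(* code (lexicographic rank) of the multi-index (j_1..j_m) of the diagonal
   block B_{j_1..j_m} containing column c of level m *)
Definition col_block (M J : nat) (r : nat -> nat) (c m : nat) : nat :=
  ((c - coloff M J r m) %/ r m)%N.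

(* (i, c) lies in one of the diagonal blocks B_{j_1..j_m} of the MRA-lp
   pattern, where lf = leaf i *)
Definition mra_pos (M J : nat) (r : nat -> nat) (lf c : nat) : bool :=
  [exists m : 'I_M.+1,
     in_level M J r c m && (lf %/ J ^ (M - m) == col_block M J r c m)%N].

Definition has_mra_pattern (R : ringType) (n M J : nat) (r : nat -> nat)
  (leaf : 'I_n -> nat) (B : 'M[R]_(n, Nprime M J r)) : Prop :=
  forall (i : 'I_n) (c : 'I_(Nprime M J r)),
    ~~ mra_pos M J r (leaf i) c -> B i c = 0.

Definition LambdaD (R : ringType) (n M J : nat) (r : nat -> nat)
  (B : 'M[R]_(n, Nprime M J r)) (D : 'M[R]_n) : 'M[R]_(Nprime M J r) :=
  1%:M + B^T *m D *m B.

Definition is_cholesky (R : numDomainType) (k : nat) (A L : 'M[R]_k) : Prop :=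
  [/\ (forall i j : 'I_k, (i < j)%N -> L i j = 0),
      (forall i : 'I_k, 0 < L i i) &
      L *m L^T = A].

(* (c, c') with c in level p, c' in level q, q <= p, lies in one of the
   J^q diagonal blocks (of size J^(p-q) r'_p x r'_q) of the
   (M+1-p, M+1-q)-th block of Lambda_D *)
Definition lam_block_pos (M J : nat) (r : nat -> nat) (c c' : nat) : bool :=
  [exists p : 'I_M.+1, exists q : 'I_M.+1,
     [&& (q <= p)%N, in_level M J r c p, in_level M J r c' q &
        ((c - coloff M J r p) %/ (J ^ (p - q) * r p)
           == (c' - coloff M J r q) %/ r q)%N]].

Definition mra_edge (M J : nat) (r : nat -> nat) (c c' : nat) : bool :=
  (c != c')%N && (lam_block_pos M J r c c' || lam_block_pos M J r c' c).

Definition col_nnz (R : ringType) (k : nat) (A : 'M[R]_k) (j : 'I_k) : nat :=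
  #|[set i : 'I_k | A i j != 0]|.

(* Main.v *)
Require Import Defs.
From HB Require Import structures.
From mathcomp Require Import all_boot all_order all_algebra.
From mathcomp Require Import zify.
Import Order.TTheory GRing.Theory Num.Theory.
Set Implicit Arguments. Unset Strict Implicit. Unset Printing Implicit Defensive.
Local Open Scope nat_scope.

Definition fo (M J : nat) (r : nat -> nat) m := (\sum_(m <= l < M.+1) ncols J r l)%N.

Lemma fo_S M J r m : m <= M -> fo M J r m = ncols J r m + fo M J r m.+1.
Proof. by move=> h; rewrite /fo big_ltn // ltnS. Qed.

Lemma fo_ge M J r m : M < m -> fo M J r m = 0.
Proof. by move=> h; rewrite /fo big_geq. Qed.

Lemma fo_0 M J r : fo M J r 0 = Nprime M J r.
Proof. by rewrite /fo /Nprime big_mkord. Qed.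

Lemma fo_succ M J r m : fo M J r m.+1 <= fo M J r m.
Proof.
case: (leqP m M) => h; first by rewrite (fo_S _ _ h) leq_addl.
by rewrite fo_ge // (ltn_trans h).
Qed.

Lemma fo_anti M J r a b : a <= b -> fo M J r b <= fo M J r a.
Proof.
elim: b => [|b IH]; first by rewrite leqn0 => /eqP ->.
rewrite leq_eqVlt => /orP [/eqP -> //|]; rewrite ltnS => /IH.
exact: leq_trans (fo_succ _ _ _ _).
Qed.

Lemma in_levelE M J r c m :
  in_level M J r c m = (m <= M) && (fo M J r m.+1 <= c < fo M J r m).
Proof.
rewrite /in_level /coloff -/(fo M J r m.+1).
case: (leqP m M) => h //=; by rewrite (fo_S _ _ h) addnC.
Qed.

Lemma level_order M J r c c' p q :
  in_level M J r c p -> in_level M J r c' q -> p < q -> c' < c.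
Proof.
rewrite !in_levelE => /andP [hp /andP [h1 h2]] /andP [hq /andP [h3 h4]] pq.
apply: (leq_trans h4); apply: leq_trans h1; exact: fo_anti.
Qed.

Lemma level_uniq M J r c p q :
  in_level M J r c p -> in_level M J r c q -> p = q.
Proof.
move=> hp hq; case: (ltngtP p q) => // h.
- by have := level_order hp hq h; rewrite ltnn.
- by have := level_order hq hp h; rewrite ltnn.
Qed.

Lemma level_le M J r c c' p q :
  in_level M J r c p -> in_level M J r c' q -> c <= c' -> q <= p.
Proof.
move=> hp hq hc; rewrite leqNgt; apply/negP => h.
by have := level_order hp hq h; rewrite ltnNge hc.
Qed.

Lemma level_exists M J r c : c < Nprime M J r -> exists m, in_level M J r c m.
Proof.
rewrite -fo_0 => hc.
suff: forall k, fo M J r k <= c -> exists m, in_level M J r c m.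
  by apply; rewrite fo_ge.
elim=> [|k IH]; first by rewrite leqNgt hc.
move=> hk; case: (leqP (fo M J r k) c) => h; first exact: IH.
exists k; rewrite in_levelE hk h andbT.
by case: (leqP k M) => // /fo_ge e; rewrite e in h.
Qed.

Lemma divJ J x a b c : a <= b -> b <= c ->
  x %/ J ^ (c - b) %/ J ^ (b - a) = x %/ J ^ (c - a).
Proof. by move=> h1 h2; rewrite -divnMA -expnD; congr (_ %/ J ^ _); lia. Qed.

Lemma divMr x a b : x %/ (a * b) = x %/ b %/ a.
Proof. by rewrite mulnC divnMA. Qed.

(* anc i k : i is (weakly) coarser than k and its block is an ancestor *)
Definition anc M J r (i k : nat) := lam_block_pos M J r k i.

Lemma ancP M J r i k :
  reflect (exists p q, [/\ q <= p, in_level M J r k p, in_level M J r i q &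
             col_block M J r i q = col_block M J r k p %/ J ^ (p - q)])
          (anc M J r i k).
Proof.
apply: (iffP existsP) => [[p /existsP [q /and4P [h1 h2 h3 /eqP h4]]]|
                          [p [q [h1 h2 h3 h4]]]].
  by exists p, q; split => //; rewrite /col_block -h4 divMr.
have pM : p < M.+1 by move: h2; rewrite in_levelE ltnS => /andP [].
have qM : q < M.+1 by move: h3; rewrite in_levelE ltnS => /andP [].
exists (Ordinal pM); apply/existsP; exists (Ordinal qM).
by rewrite /= h1 h2 h3 /=; apply/eqP; rewrite divMr; exact: esym h4.
Qed.

Lemma anc_refl M J r c : c < Nprime M J r -> anc M J r c c.
Proof.
move=> /level_exists [m hm]; apply/ancP; exists m, m.
by rewrite subnn expn0 divn1.
Qed.

Lemma anc_sym M J r i j : j < i -> anc M J r j i -> anc M J r i j.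
Proof.
move=> ji /ancP [p [q [h1 h2 h3 h4]]].
have e : p = q by apply/eqP; rewrite eqn_leq h1 (level_le h3 h2) // ltnW.
subst q; apply/ancP; exists p, p; split=> //.
by move: h4; rewrite subnn expn0 !divn1.
Qed.

Lemma anc_trans M J r i k j :
  anc M J r i k -> anc M J r k j -> anc M J r i j.
Proof.
move=> /ancP [p [q [h1 h2 h3 h4]]] /ancP [p' [q' [h1' h2' h3' h4']]].
have e := level_uniq h2 h3'; subst q'.
apply/ancP; exists p', q; split => //; first exact: leq_trans h1'.
by rewrite h4 h4' divJ.
Qed.

Lemma anc_join M J r i j k :
  j < i -> anc M J r i k -> anc M J r j k -> anc M J r i j.
Proof.
move=> ji /ancP [p [q [h1 h2 h3 h4]]] /ancP [p' [q' [h1' h2' h3' h4']]].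
have e := level_uniq h2 h2'; subst p'.
have qq : q <= q' := level_le h3' h3 (ltnW ji).
apply/ancP; exists q', q; split => //.
by rewrite h4 h4' divJ.
Qed.

Lemma mra_anc M J r lf c c' :
  mra_pos M J r lf c -> mra_pos M J r lf c' -> anc M J r c c' || anc M J r c' c.
Proof.
move=> /existsP [m /andP [hm /eqP em]] /existsP [m' /andP [hm' /eqP em']].
have mM : m <= M by move: hm; rewrite in_levelE => /andP [].
have mM' : m' <= M by move: hm'; rewrite in_levelE => /andP [].
case: (leqP m m') => h.
  apply/orP; left; apply/ancP; exists m', m; split => //.
  by rewrite -em -em' divJ.
apply/orP; right; apply/ancP; exists m, m'; split => //; first exact: ltnW.
by rewrite -em -em' divJ // ltnW.
Qed.

Lemma mra_up M J r lf c k :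
  mra_pos M J r lf k -> anc M J r c k -> mra_pos M J r lf c.
Proof.
move=> /existsP [m /andP [hm /eqP em]] /ancP [p [q [h1 h2 h3 h4]]].
have e := level_uniq hm h2; subst p.
have qM : q < M.+1 by move: h3; rewrite in_levelE ltnS => /andP [].
have mM : m <= M by move: hm; rewrite in_levelE => /andP [].
apply/existsP; exists (Ordinal qM); rewrite /= h3 /=; apply/eqP.
by rewrite h4 -em divJ.
Qed.
Local Open Scope nat_scope.

Lemma sum_int n lo hi : \sum_(i < n) (lo <= i < hi) = minn hi n - lo.
Proof.
elim: n => [|n IH]; first by rewrite big_ord0 minn0.
rewrite big_ord_recr /= IH.
case: (leqP lo n) => h1; case: (ltnP n hi) => h2 /=; lia.
Qed.

Lemma card_sum n (A : {set 'I_n}) : #|A| = \sum_(i < n) (i \in A).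
Proof.
rewrite -sum1_card big_mkcond; apply: eq_bigr => i _; by case: (i \in A).
Qed.

Lemma card_int n lo hi : #|[set i : 'I_n | lo <= i < hi]| = minn hi n - lo.
Proof.
rewrite card_sum -sum_int; apply: eq_bigr => i _; by rewrite inE.
Qed.

Lemma count_anc M J r (c : 'I_(Nprime M J r)) :
  (forall m, m <= M -> 1 <= r m) ->
  #|[set i : 'I_(Nprime M J r) | anc M J r i c]| <= Nsmall M r.
Proof.
move=> rpos.
have [p hp] := level_exists (ltn_ord c).
pose a q := col_block M J r c p %/ J ^ (p - q).
pose lo q := coloff M J r q + a q * r q.
pose T q := [set i : 'I_(Nprime M J r) | lo q <= i < lo q + r q].
apply: (@leq_trans (\sum_(q < M.+1) #|T q|)); last first.
  rewrite /Nsmall; apply: leq_sum => q _; rewrite card_int; lia.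
rewrite card_sum (@leq_trans (\sum_(i < Nprime M J r) \sum_(q < M.+1) (i \in T q))) //; last first.
  by rewrite exchange_big /=; apply: leq_sum => q _; rewrite card_sum.
apply: leq_sum => i _; rewrite inE.
case hi: (anc M J r i c) => //=.
move/ancP: hi => [p' [q [h1 h2 h3 h4]]].
have e := level_uniq hp h2; subst p'.
have qM : q < M.+1 by move: h3; rewrite in_levelE ltnS => /andP [].
rewrite (bigD1 (Ordinal qM)) //= inE.
have rq : 0 < r q by apply: rpos; rewrite -ltnS.
have cq : coloff M J r q <= i.
  by move: h3; rewrite /in_level => /andP [_ /andP []].
have := leq_trunc_div (i - coloff M J r q) (r q).
have := ltn_ceil (i - coloff M J r q) rq.
rewrite /lo /a -h4 /col_block.
set d := (i - coloff M J r q) %/ r q => h5 h6.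
have : coloff M J r q + d * r q <= i < coloff M J r q + d * r q + r q.
  move: h5 h6; rewrite mulSn; lia.
by case/andP => -> ->.
Qed.

Local Open Scope ring_scope.


Lemma Lam_zero (R : rcfType) n M J r (leaf : 'I_n -> nat)
  (B : 'M[R]_(n, Nprime M J r)) (D : 'M[R]_n) (c c' : 'I_(Nprime M J r)) :
  has_mra_pattern leaf B -> is_diag_mx D ->
  ~~ anc M J r c c' -> ~~ anc M J r c' c -> LambdaD B D c c' = 0.
Proof.
move=> hB /is_diag_mxP hD h1 h2.
have ne : c != c'.
  by apply/eqP => e; subst c'; move: h1; rewrite anc_refl.
rewrite /LambdaD !mxE (negbTE ne) mulr0n add0r.
apply: big1 => b _; rewrite mxE (bigD1 b) //= big1 ?addr0; last first.
  by move=> a na; rewrite hD ?mulr0 // eq_sym.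
rewrite !mxE.
case e1: (B b c == 0); first by rewrite (eqP e1) !mul0r.
case e2: (B b c' == 0); first by rewrite (eqP e2) mulr0.
have p1 : mra_pos M J r (leaf b) c.
  by apply: contraFT e1 => /hB ->.
have p2 : mra_pos M J r (leaf b) c'.
  by apply: contraFT e2 => /hB ->.
by move: (mra_anc p1 p2); rewrite (negbTE h1) (negbTE h2).
Qed.

Lemma Lnz (R : rcfType) n M J r (leaf : 'I_n -> nat)
  (B : 'M[R]_(n, Nprime M J r)) (D : 'M[R]_n) (L : 'M[R]_(Nprime M J r)) :
  has_mra_pattern leaf B -> is_diag_mx D -> is_cholesky (LambdaD B D) L ->
  forall i j : 'I_(Nprime M J r), (j < i)%N -> L i j != 0 -> anc M J r i j.
Proof.
move=> hB hD [Lup Lpos LL].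
suff H : forall k (i j : 'I_(Nprime M J r)), val j = k -> (j < i)%N ->
    L i j != 0 -> anc M J r i j by move=> i j; exact: H.
elim/ltn_ind => k IH i j ejk ji nz.
apply: contraTT nz => na; rewrite negbK.
have nb : ~~ anc M J r j i by apply: contra na; exact: anc_sym.
have := Lam_zero hB hD na nb.
rewrite -LL mxE (bigD1 j) //= big1 ?addr0; last first.
  move=> k' nk'; rewrite mxE.
  case: (ltngtP k' j) => h.
  - case e1: (L i k' == 0); first by rewrite (eqP e1) mul0r.
    case e2: (L j k' == 0); first by rewrite (eqP e2) mulr0.
    have a1 : anc M J r i k'.
      apply: (IH k') => //; first by rewrite -ejk.
        exact: ltn_trans h ji.
      by rewrite e1.
    have a2 : anc M J r j k'.
      by apply: (IH k') => //; [rewrite -ejk|rewrite e2].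
    by move: na; rewrite (anc_join ji a1 a2).
  - by rewrite (Lup j k' h) mulr0.
  - by move: nk'; rewrite (_ : k' = j) ?eqxx //; apply: val_inj.
rewrite mxE => /eqP; rewrite mulf_eq0 => /orP [/eqP -> //|].
by rewrite (gt_eqF (Lpos j)).
Qed.

Lemma L_unit (R : rcfType) k (L : 'M[R]_k) :
  (forall i j : 'I_k, (i < j)%N -> L i j = 0) -> (forall i, 0 < L i i) ->
  L \in unitmx.
Proof.
move=> Lup Lpos; rewrite unitmxE det_trig; last by apply/is_trig_mxP.
rewrite unitfE; apply/prodf_neq0 => i _; by rewrite (gt_eqF (Lpos i)).
Qed.

Lemma Xnz (R : rcfType) n M J r (leaf : 'I_n -> nat)
  (B : 'M[R]_(n, Nprime M J r)) (D : 'M[R]_n) (L : 'M[R]_(Nprime M J r)) :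
  has_mra_pattern leaf B -> is_diag_mx D -> is_cholesky (LambdaD B D) L ->
  forall i j : 'I_(Nprime M J r), (invmx L) i j != 0 ->
    (j <= i)%N && anc M J r i j.
Proof.
move=> hB hD hL; have hL' := hL; move: hL' => [Lup Lpos LL].
have U := L_unit Lup Lpos.
have LX : L *m invmx L = 1 by rewrite mulmxV.
suff H : forall k (i j : 'I_(Nprime M J r)), val i = k ->
    (invmx L) i j != 0 -> (j <= i)%N && anc M J r i j by move=> i j; exact: H.
elim/ltn_ind => k IH i j eik nz.
apply: contraTT nz => na; rewrite negbK.
have ij : i != j by apply: contra na => /eqP ->; rewrite leqnn anc_refl.
move/matrixP: LX => /(_ i j); rewrite !mxE (negbTE ij) /=.
rewrite (bigD1 i) //= big1 ?addr0; last first.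
  move=> k' nk'.
  case: (ltngtP k' i) => h.
  - case e1: (L i k' == 0); first by rewrite (eqP e1) mul0r.
    case e2: (invmx L k' j == 0); first by rewrite (eqP e2) mulr0.
    have a1 : anc M J r i k' by apply: (Lnz hB hD hL); rewrite ?e1.
    have /andP [a2 a3] : (j <= k')%N && anc M J r k' j.
      by apply: (IH k') => //; [rewrite -eik | rewrite e2].
    move: na; rewrite (anc_trans a1 a3) andbT => /negP; case.
    exact: leq_trans a2 (ltnW h).
  - by rewrite Lup ?mul0r.
  - by move: nk'; rewrite (_ : k' = i) ?eqxx //; apply: val_inj.
move/eqP; rewrite mulf_eq0 => /orP [|/eqP -> //].
by rewrite (gt_eqF (Lpos i)).
Qed.

Local Open Scope nat_scope.

Lemma card_level M J r p : (p <= M)%N ->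
  #|[set c : 'I_(Nprime M J r) | in_level M J r c p]| = (J ^ p * r p)%N.
Proof.
move=> pM.
have -> : [set c : 'I_(Nprime M J r) | in_level M J r c p] =
          [set c : 'I_(Nprime M J r) | fo M J r p.+1 <= c < fo M J r p]%N.
  by apply/setP => c; rewrite !inE in_levelE pM.
rewrite card_int (fo_S _ _ pM) -fo_0.
have := fo_anti M J r (leq0n p); rewrite (fo_S _ _ pM) /ncols; lia.
Qed.

Local Open Scope ring_scope.

Theorem proposition5 :
  exists C : nat,
  forall (R : rcfType) (n M J : nat) (r : nat -> nat)
    (leaf : 'I_n -> nat) (obs : {set 'I_n})
    (B : 'M[R]_(n, Nprime M J r)) (D : 'M[R]_n) (L : 'M[R]_(Nprime M J r)),
    (2 <= J)%N ->
    (forall m : nat, (m <= M)%N -> (1 <= r m)%N) ->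
    (forall i : 'I_n, (leaf i < J ^ M)%N) ->
    (forall i i' : 'I_n, (leaf i < leaf i')%N -> (i < i')%N) ->
    (forall b : nat, (b < J ^ M)%N -> exists2 i : 'I_n, i \in obs & leaf i = b) ->
    has_mra_pattern leaf B ->
    is_diag_mx D ->
    (forall i : 'I_n, 0 <= D i i) ->
    (forall i : 'I_n, i \notin obs -> D i i = 0) ->
    is_cholesky (LambdaD B D) L ->
    [/\
      (* (a) *)
      (forall p q : nat, (q <= p <= M)%N ->
         #|[set c : 'I_(Nprime M J r) | in_level M J r c p]| = (J ^ p * r p)%N /\
         #|[set c : 'I_(Nprime M J r) | in_level M J r c q]| = (J ^ q * r q)%N /\
         (forall c c' : 'I_(Nprime M J r),
            in_level M J r c p -> in_level M J r c' q ->
            ((c - coloff M J r p) %/ (J ^ (p - q) * r p)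
               != (c' - coloff M J r q) %/ r q)%N ->
            LambdaD B D c c' = 0)),
      (* (b) *)
      (forall i j : 'I_(Nprime M J r), (j < i)%N ->
         ~~ mra_edge M J r i j -> L i j = 0 /\ (invmx L) i j = 0),
      (* (c) *)
      (forall (i : 'I_n) (c : 'I_(Nprime M J r)),
         ~~ mra_pos M J r (leaf i) c -> (B *m (invmx L)^T) i c = 0) &
      (* (d) *)
      (forall c : 'I_(Nprime M J r),
         (col_nnz L c <= C * Nsmall M r)%N /\
         (col_nnz (invmx L) c <= C * Nsmall M r)%N)].
Proof.
exists 1%N => R n M J r leaf obs B D L _ rpos _ _ _ hB hD _ _ hL.
have hL' := hL; move: hL' => [Lup Lpos LL].
split.
- move=> p q /andP [qp pM]; split; first exact: card_level.
  split; first by apply: card_level; exact: leq_trans pM.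
  move=> c c' hc hc' hne; apply: (Lam_zero hB hD).
  + apply/negP => /ancP [pp [qq [h1 h2 h3 h4]]].
    have e1 := level_uniq hc' h2; have e2 := level_uniq hc h3; subst pp qq.
    have epq : p = q by apply/eqP; rewrite eqn_leq qp h1.
    subst q; move: h4; rewrite subnn expn0 divn1 /col_block => h4.
    by move: hne; rewrite subnn expn0 mul1n h4 eqxx.
  + apply/negP => /ancP [pp [qq [h1 h2 h3 h4]]].
    have e1 := level_uniq hc h2; have e2 := level_uniq hc' h3; subst pp qq.
    by move: hne; rewrite divMr; move: h4; rewrite /col_block => ->; rewrite eqxx.
- move=> i j ji; rewrite /mra_edge eq_sym (ltn_eqF ji) /= negb_or => /andP [_ na].
  split.
  + by apply/eqP; apply: contraNT na; exact: (Lnz hB hD hL).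
  + by apply/eqP; apply: contraNT na => /(Xnz hB hD hL) /andP [_ h].
- move=> i c hc; rewrite !mxE; apply: big1 => k _; rewrite mxE.
  case e1: (B i k == 0); first by rewrite (eqP e1) mul0r.
  case e2: (invmx L c k == 0); first by rewrite (eqP e2) mulr0.
  have p1 : mra_pos M J r (leaf i) k by apply: contraFT e1 => /hB ->.
  have /andP [_ a] := Xnz hB hD hL (negbT e2).
  by move: hc; rewrite (mra_up p1 a).
- move=> c; rewrite mul1n; split.
  + apply: leq_trans (count_anc c rpos); apply: subset_leq_card.
    apply/subsetP => i; rewrite !inE => nz.
    case: (ltngtP i c) => h.
    * by move: nz; rewrite (Lup i c h) eqxx.
    * exact: (Lnz hB hD hL).
    * by rewrite (_ : i = c) ?anc_refl //; apply: val_inj.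
  + apply: leq_trans (count_anc c rpos); apply: subset_leq_card.
    apply/subsetP => i; rewrite !inE => /(Xnz hB hD hL) /andP [].
    done.
Qed.
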